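(* Let $(E,\le,u)$ be an ordered effect space with pointed positive cone. Let $A$ be a finite set of positive subunital linear maps on $E$ that is closed under composition. If every $T\in A$ is persistent, then every $T\in A$ is unital, i.e. $T(u)=u$.
   Context: An ordered effect space is a triple $(E,\le,u)$: $E$ a real vector space, $\le$ a preorder on $E$ compatible with addition and multiplication by nonnegative scalars, and $u\in E_+=\{x: x\ge0\}$ a distinguished unit. The cone $E_+$ is pointed if $E_+\cap(-E_+)=\{0\}$. A linear map $T:E\to E$ is positive if $T(E_+)\subseteq E_+$, subunital if $T(u)\le u$, unital if $T(u)=u$. A positive map $T$ is persistent if for every $x\in E_+\setminus\{0\}$ one has $T(x)\in E_+\setminus\{0\}$ (i.e. $T$ annihilates no nonzero positive element). *)

(* Defs.v *)
From HB Require Import structures.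
From mathcomp Require Import all_boot all_order all_algebra.
From mathcomp Require Import boolp classical_sets cardinality reals.
Set Implicit Arguments. Unset Strict Implicit. Unset Printing Implicit Defensive.
Import Order.TTheory GRing.Theory Num.Theory.
Local Open Scope ring_scope.

Section Effect.
Context {R : realType} {E : lmodType R}.

Definition ordered_effect_space (le : E -> E -> Prop) (u : E) : Prop :=
  [/\ (forall x, le x x),
      (forall x y z, le x y -> le y z -> le x z),
      (forall x y z, le x y -> le (x + z) (y + z)),
      (forall (a : R) x y, 0 <= a -> le x y -> le (a *: x) (a *: y))
    & le 0 u].

Definition pointed_cone (le : E -> E -> Prop) : Prop :=
  forall x, le 0 x -> le 0 (- x) -> x = 0.

Definition positive_map (le : E -> E -> Prop) (T : E -> E) : Prop :=
  forall x, le 0 x -> le 0 (T x).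

Definition subunital (le : E -> E -> Prop) (u : E) (T : E -> E) : Prop :=
  le (T u) u.

Definition unital (u : E) (T : E -> E) : Prop := T u = u.

Definition persistent (le : E -> E -> Prop) (T : E -> E) : Prop :=
  forall x, le 0 x -> x <> 0 -> le 0 (T x) /\ T x <> 0.

End Effect.

(* Main.v *)
Require Import Defs.
From HB Require Import structures.
From mathcomp Require Import all_boot all_order all_algebra.
From mathcomp Require Import boolp classical_sets cardinality reals.
From mathcomp Require Import zify.
Import Order.TTheory GRing.Theory Num.Theory.
Local Open Scope classical_set_scope.
Local Open Scope ring_scope.

Lemma pigeon {T : Type} {A : set T} {f : nat -> T} :
  finite_set A -> (forall j, A (f j)) -> exists a b, (a < b)%N /\ f a = f b.
Proof.
move=> fA Af; apply: contra_notP infinite_nat => H.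
have inj : {in [set: nat] &, injective f}.
  move=> a b _ _ fab; case: (ltngtP a b) => // lt; exfalso; apply: H.
  - by exists a, b.
  - by exists b, a.
rewrite -(eq_finite_set (inj_card_eq inj)).
by apply: sub_finite_set fA => _ [j _ <-].
Qed.

Theorem theorem4p13 (R : realType) (E : lmodType R)
    (le : E -> E -> Prop) (u : E) (A : set (E -> E)) :
  ordered_effect_space le u ->
  pointed_cone le ->
  finite_set A ->
  (forall T, A T -> [/\ linear T, positive_map le T & subunital le u T]) ->
  (forall S T, A S -> A T -> A (S \o T)) ->
  (forall T, A T -> persistent le T) ->
  forall T, A T -> unital u T.
Proof.
move=> [refl trans addc _ le0u] pt fA HA comp pers T AT.
have [linT posT subT] := HA T AT.
have TB : forall x y, T (x - y) = T x - T y.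
  move=> x y; have H := linT (-1) y x.
  by rewrite !scaleN1r in H; rewrite addrC H addrC.
have sub1 : forall x y, le x y -> le 0 (y - x).
  by move=> x y /(addc _ _ (- x)); rewrite subrr.
have sub2 : forall x y, le 0 (y - x) -> le x y.
  by move=> x y /(addc _ _ x); rewrite add0r subrK.
have itB : forall j x y, iter j T (x - y) = iter j T x - iter j T y.
  by elim=> [//|j IH] x y /=; rewrite IH TB.
have itpos : forall j x, le 0 x -> le 0 (iter j T x).
  by elim=> [//|j IH] x /= /IH /posT.
have itmono : forall j x y, le x y -> le (iter j T x) (iter j T y).
  by move=> j x y /sub1 /(itpos j); rewrite itB => /sub2.
have itu : forall j, le (iter j T u) u.
  elim=> [|j IH] /=; first exact: refl.
  by apply: trans subT; have := itmono 1%N _ _ IH.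
have itA : forall j, A (iter j.+1 T).
  elim=> [|j IH]; first by have -> : iter 1 T = T by apply: funext.
  have -> : iter j.+2 T = T \o iter j.+1 T by apply: funext.
  exact: comp.
have itpers : forall m x, le 0 x -> iter m T x = 0 -> x = 0.
  elim=> [//|m IH] x x0 /= H; apply: IH => //.
  case: (pselect (iter m T x = 0)) => // nz.
  by have [_ ] := pers T AT (iter m T x) (itpos m x x0) nz.
have [a [b [ab eqab]]] := pigeon fA itA.
set m := a.+1.
have eqmn : iter m T u = iter b.+1 T u by rewrite /m eqab.
have bE : b.+1 = (m.+1 + (b - a.+1))%N by rewrite /m; lia.
have le1 : le (iter m T u) (iter m.+1 T u).
  rewrite eqmn bE iterD; apply: itmono; exact: itu.
apply/eqP; rewrite eq_sym -subr_eq0; apply/eqP.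
have y0 : le 0 (u - T u) by apply: sub1.
apply: (itpers m) => //; apply: (pt (iter m T (u - T u))); first exact: itpos.
have -> : iter m T (u - T u) = iter m T u - iter m.+1 T u.
  by rewrite itB iterSr.
by rewrite opprB; apply: sub1.
Qed.
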